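(* There is a universal constant $C>0$ such that for all $a,b,U,V\in\mathbb{R}$ with $U>1$, $V>0$ and $|a|,|b|<V$, and for $k=0,1$, $$\int_{-U}^U\big|\mathcal{F}\big[(\cdot)^k\mathbf{1}_{[a,b]}\big](u)\big|du\le C\big(U^{2k-1}V^{k+1}+(1-k)\log U\big).$$
   Context: $\mathcal{F}f(u)=\int e^{iux}f(x)dx$; $(\cdot)^k\mathbf{1}_{[a,b]}$ is the function $x\mapsto x^k\mathbf{1}_{[a,b]}(x)$. *)

(* Defs.v *)
From Stdlib Require Import Reals.
From Coquelicot Require Import Coquelicot.
Open Scope R_scope.

Definition cexpi (t : R) : C := (cos t, sin t).

Definition fourier (f : R -> C) (u : R) : C :=
  @RInt_gen C_R_CompleteNormedModule (fun x => (cexpi (u * x) * f x)%C)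
           (Rbar_locally m_infty) (Rbar_locally p_infty).

Definition ind (a b : R) (x : R) : R :=
  if Rle_dec a x then if Rle_dec x b then 1 else 0 else 0.

Definition mon_ind (k : nat) (a b : R) (x : R) : C := RtoC (x ^ k * ind a b x).

(* Main.v *)
Require Import Defs.
From Stdlib Require Import Reals ZArith Lra Lia.
From Coquelicot Require Import Coquelicot.
Open Scope R_scope.

Lemma abs_cos_le x : Rabs (cos x) <= 1.
Proof. apply Rabs_le. apply COS_bound. Qed.
Lemma abs_sin_le x : Rabs (sin x) <= 1.
Proof. apply Rabs_le. apply SIN_bound. Qed.

Lemma cos_lip s t : Rabs (cos s - cos t) <= Rabs (s - t).
Proof.
  destruct (MVT_abs cos (fun x => - sin x) t s) as [z [Hz _]].
  { intros; apply derivable_pt_lim_cos. }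
  rewrite Hz. rewrite Rabs_Ropp.
  pose proof (abs_sin_le z). pose proof (Rabs_pos (s - t)). nra.
Qed.
Lemma sin_lip s t : Rabs (sin s - sin t) <= Rabs (s - t).
Proof.
  destruct (MVT_abs sin cos t s) as [z [Hz _]].
  { intros; apply derivable_pt_lim_sin. }
  rewrite Hz.
  pose proof (abs_cos_le z). pose proof (Rabs_pos (s - t)). nra.
Qed.

Lemma pow_abs_le x V k : Rabs x <= V -> Rabs (x ^ k) <= V ^ k.
Proof. intros H. rewrite <- RPow_abs. apply pow_incr. split; [apply Rabs_pos|exact H]. Qed.

Lemma Rabs_le_of a c x V : a <= x <= c -> Rabs a <= V -> Rabs c <= V -> Rabs x <= V.
Proof.
  intros H Ha Hc. apply Rabs_le. apply Rabs_le_between in Ha. apply Rabs_le_between in Hc. lra.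
Qed.

Lemma lip_cont (g : R -> R) L x : 0 <= L ->
  (forall u v, Rabs (g u - g v) <= L * Rabs (u - v)) -> continuous g x.
Proof.
  intros HL H. apply continuity_pt_filterlim.
  intros eps Heps.
  exists (eps / (L + 1)). split.
  - apply Rdiv_lt_0_compat; lra.
  - intros y [_ Hy]. simpl in *. unfold R_dist in *.
    eapply Rle_lt_trans. apply H.
    apply Rle_lt_trans with (L * (eps / (L+1))).
    + apply Rmult_le_compat_l; lra.
    + apply Rmult_lt_reg_r with (L+1). lra. field_simplify; try lra. 
Qed.

Section TF.
Variable t : R -> R.
Hypothesis Ht : forall s, Rabs (t s) <= 1.
Hypothesis Htl : forall s r, Rabs (t s - t r) <= Rabs (s - r).
Hypothesis Htc : forall k u x, continuous (fun x => t (u*x) * x^k) x.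

Definition TF k a c u := RInt (fun x => t (u*x) * x^k) a c.

Lemma TF_ex k a c u : ex_RInt (fun x => t (u*x) * x^k) a c.
Proof. apply (@ex_RInt_continuous R_CompleteNormedModule); intros; apply Htc. Qed.

Lemma TF_bound k a c u V : a <= c -> Rabs a <= V -> Rabs c <= V ->
  Rabs (TF k a c u) <= (c - a) * V ^ k.
Proof.
  intros ac Ha Hc. unfold TF. apply abs_RInt_le_const; auto. apply TF_ex.
  intros x Hx. rewrite Rabs_mult.
  pose proof (pow_abs_le x V k (Rabs_le_of a c x V Hx Ha Hc)).
  pose proof (Ht (u*x)). pose proof (Rabs_pos (t (u*x))). pose proof (Rabs_pos (x^k)).
  nra.
Qed.

Lemma TF_lip k a c u v V : a <= c -> Rabs a <= V -> Rabs c <= V ->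
  Rabs (TF k a c u - TF k a c v) <= ((c - a) * (V * V ^ k)) * Rabs (u - v).
Proof.
  intros ac Ha Hc. unfold TF.
  assert (E := RInt_minus (V := R_CompleteNormedModule) _ _ a c (TF_ex k a c u) (TF_ex k a c v)).
  assert (E' : RInt (fun x => t (u*x) * x^k) a c - RInt (fun x => t (v*x) * x^k) a c
     = RInt (fun x => minus (t (u*x) * x^k) (t (v*x) * x^k)) a c) by (symmetry; exact E).
  rewrite E'. rewrite Rmult_assoc.
  apply abs_RInt_le_const; auto.
  - apply (ex_RInt_minus (V := R_NormedModule)); apply TF_ex.
  - intros x Hx. change (minus (t (u * x) * x ^ k) (t (v * x) * x ^ k)) with
      (t (u * x) * x ^ k - t (v * x) * x ^ k).
    replace (t (u * x) * x ^ k - t (v * x) * x ^ k) with ((t (u*x) - t (v*x)) * x^k) by ring.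
    rewrite Rabs_mult.
    assert (Hx' := Rabs_le_of a c x V Hx Ha Hc).
    pose proof (pow_abs_le x V k Hx').
    pose proof (Htl (u*x) (v*x)) as H1.
    replace (u * x - v * x) with ((u - v) * x) in H1 by ring.
    rewrite Rabs_mult in H1.
    pose proof (Rabs_pos (t (u*x) - t (v*x))). pose proof (Rabs_pos (x^k)).
    pose proof (Rabs_pos (u - v)). pose proof (Rabs_pos x).
    assert (Rabs (t (u * x) - t (v * x)) <= Rabs (u - v) * V) by nra.
    nra.
Qed.
End TF.

Lemma cont_cos (u:R) (k:nat) x : continuous (fun x => cos (u*x) * x^k) x.
Proof. apply (@ex_derive_continuous R_AbsRing R_NormedModule). auto_derive. auto. Qed.
Lemma cont_sin (u:R) (k:nat) x : continuous (fun x => sin (u*x) * x^k) x.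
Proof. apply (@ex_derive_continuous R_AbsRing R_NormedModule). auto_derive. auto. Qed.

Lemma diff_bound (p q u : R) : u <> 0 -> Rabs p <= 1 -> Rabs q <= 1 ->
  Rabs (p / u - q / u) <= 2 / Rabs u.
Proof.
  intros Hu Hp Hq.
  replace (p / u - q / u) with ((p - q) * / u) by (field; auto).
  rewrite Rabs_mult, Rabs_inv. unfold Rdiv.
  assert (0 < Rabs u) by (apply Rabs_pos_lt; auto).
  apply Rmult_le_compat_r. left; apply Rinv_0_lt_compat; auto.
  eapply Rle_trans. apply Rabs_triang. rewrite Rabs_Ropp. lra.
Qed.

Lemma TFcos0_decay a c u : u <> 0 -> Rabs (TF cos 0 a c u) <= 2 / Rabs u.
Proof.
  intros Hu.
  assert (H := is_RInt_derive (V := R_CompleteNormedModule)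
      (fun x => sin (u*x) / u) (fun x => cos (u*x) * x^0) a c).
  specialize (H ltac:(intros x _; auto_derive; auto; simpl; field; auto) ltac:(intros x _; apply cont_cos)).
  unfold TF. rewrite (is_RInt_unique (V := R_CompleteNormedModule) _ _ _ _ H).
  apply diff_bound; auto; apply abs_sin_le.
Qed.

Lemma TFsin0_decay a c u : u <> 0 -> Rabs (TF sin 0 a c u) <= 2 / Rabs u.
Proof.
  intros Hu.
  assert (H := is_RInt_derive (V := R_CompleteNormedModule)
      (fun x => - cos (u*x) / u) (fun x => sin (u*x) * x^0) a c).
  specialize (H ltac:(intros x _; auto_derive; auto; simpl; field; auto) ltac:(intros x _; apply cont_sin)).
  unfold TF. rewrite (is_RInt_unique (V := R_CompleteNormedModule) _ _ _ _ H).
  apply diff_bound; auto; rewrite Rabs_Ropp; apply abs_cos_le.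
Qed.

Lemma is_RInt_gen_zero (f : R -> C) Fa Fb {FFa : Filter Fa} {FFb : Filter Fb} :
  filter_prod Fa Fb (fun ab => forall x, Rmin (fst ab) (snd ab) < x < Rmax (fst ab) (snd ab) -> f x = 0%C) ->
  @is_RInt_gen C_R_NormedModule f Fa Fb zero.
Proof.
  intros H.
  apply (is_RInt_gen_ext (fun _ => zero)).
  - eapply filter_imp; [|exact H]. intros ab Hab x Hx. symmetry. now apply Hab.
  - intros P HP. unfold filtermapi. apply filter_forall. intros ab. exists (scal (snd ab - fst ab) (zero : C_R_NormedModule)). split.
    + apply is_RInt_const.
    + replace (scal _ _) with (zero : C_R_NormedModule) by (symmetry; exact (@scal_zero_r R_Ring (NormedModule.ModuleSpace R_AbsRing C_R_NormedModule) _)). now apply locally_singleton.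
Qed.

Lemma fourier_eq k a b u :
  fourier (mon_ind k a b) u = (TF cos k a (Rmax a b) u, TF sin k a (Rmax a b) u).
Proof.
  pose (cc := Rmax a b). change (Rmax a b) with cc.
  assert (ac : a <= cc) by apply Rmax_l.
  assert (bc : b <= cc) by apply Rmax_r.
  pose (f := fun x => (cexpi (u * x) * mon_ind k a b x)%C).
  assert (Hz : forall x, x < a \/ cc < x -> f x = 0%C).
  { intros x Hx. unfold f, mon_ind, Defs.ind.
    destruct (Rle_dec a x) as [h1|h1]; [destruct (Rle_dec x b) as [h2|h2]|].
    - exfalso; lra.
    - rewrite Rmult_0_r. apply Cmult_0_r.
    - rewrite Rmult_0_r. apply Cmult_0_r. }
  assert (Hmid : is_RInt (V := C_R_NormedModule) f a cc (TF cos k a cc u, TF sin k a cc u)).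
  { apply is_RInt_ext with (f := fun x => (cos (u*x) * x^k, sin (u*x) * x^k)).
    - intros x Hx. rewrite Rmin_left, Rmax_right in Hx by exact ac.
      unfold f, mon_ind, Defs.ind.
      assert (x <= b).
      { unfold cc, Rmax in Hx. destruct (Rle_dec a b); lra. }
      destruct (Rle_dec a x) as [h1|h1]; [destruct (Rle_dec x b) as [h2|h2]|]; try (exfalso; lra).
      unfold cexpi, Cmult, RtoC; simpl. apply injective_projections; simpl; ring.
    - apply (is_RInt_fct_extend_pair (U := R_NormedModule) (V := R_NormedModule)
         (fun x => (cos (u*x) * x^k, sin (u*x) * x^k))); simpl.
      + apply (RInt_correct (V := R_CompleteNormedModule)). apply TF_ex; intros; apply cont_cos.
      + apply (RInt_correct (V := R_CompleteNormedModule)). apply TF_ex; intros; apply cont_sin. }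
  unfold fourier. fold f.
  apply (is_RInt_gen_unique (V := C_R_CompleteNormedModule)).
  replace (TF cos k a cc u, TF sin k a cc u) with
    (plus (zero : C_R_NormedModule) (plus ((TF cos k a cc u, TF sin k a cc u) : C_R_NormedModule) (zero : C_R_NormedModule))).
  2: { rewrite plus_zero_r, plus_zero_l. reflexivity. }
  apply is_RInt_gen_Chasles with (b := a).
  - apply is_RInt_gen_zero; try typeclasses eauto.
    apply (Filter_prod _ _ _ (fun x => x < a) (fun y => y = a)).
    + exists a. auto.
    + reflexivity.
    + intros x0 y0 H0 H1 x Hx. simpl in Hx. subst y0.
      rewrite Rmin_left, Rmax_right in Hx by lra. apply Hz. lra.
  - apply is_RInt_gen_Chasles with (b := cc).
    + apply is_RInt_gen_at_point. exact Hmid.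
    + apply is_RInt_gen_zero; try typeclasses eauto.
      apply (Filter_prod _ _ _ (fun y => y = cc) (fun x => cc < x)).
      * reflexivity.
      * exists cc. auto.
      * intros x0 y0 H0 H1 x Hx. simpl in Hx. subst x0.
        rewrite Rmin_left, Rmax_right in Hx by lra. apply Hz. lra.
Qed.

Lemma Cmod_le_sum p q : Cmod (p, q) <= Rabs p + Rabs q.
Proof.
  unfold Cmod; cbn [fst snd].
  rewrite <- (sqrt_pow2 (Rabs p + Rabs q)) by (pose proof (Rabs_pos p); pose proof (Rabs_pos q); lra).
  apply sqrt_le_1_alt.
  rewrite <- (pow2_abs p), <- (pow2_abs q).
  pose proof (Rabs_pos p); pose proof (Rabs_pos q). nra.
Qed.

Lemma Cmod_lip p q p' q' : Rabs (Cmod (p, q) - Cmod (p', q')) <= Rabs (p - p') + Rabs (q - q').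
Proof.
  assert (E1 : (p, q) = Cplus (p', q') ((p - p')%R, (q - q')%R))
    by (unfold Cplus; simpl; apply injective_projections; simpl; ring).
  assert (E2 : (p', q') = Cplus (p, q) ((p' - p)%R, (q' - q)%R))
    by (unfold Cplus; simpl; apply injective_projections; simpl; ring).
  pose proof (Cmod_triangle (p', q') (p - p', q - q')) as T1.
  pose proof (Cmod_triangle (p, q) (p' - p, q' - q)) as T2.
  rewrite <- E1 in T1. rewrite <- E2 in T2.
  pose proof (Cmod_le_sum (p - p') (q - q')).
  pose proof (Cmod_le_sum (p' - p) (q' - q)).
  rewrite (Rabs_minus_sym p' p), (Rabs_minus_sym q' q) in H0.
  apply Rabs_le. lra.
Qed.

Definition gk k a c u := Cmod (TF cos k a c u, TF sin k a c u).

Lemma gk_bound k a c u V : a <= c -> Rabs a <= V -> Rabs c <= V ->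
  gk k a c u <= 2 * ((c - a) * V ^ k).
Proof.
  intros. unfold gk. eapply Rle_trans. apply Cmod_le_sum.
  pose proof (TF_bound cos abs_cos_le (fun k u x => cont_cos u k x) k a c u V H H0 H1).
  pose proof (TF_bound sin abs_sin_le (fun k u x => cont_sin u k x) k a c u V H H0 H1).
  lra.
Qed.

Lemma gk_cont k a c V x : a <= c -> Rabs a <= V -> Rabs c <= V -> continuous (gk k a c) x.
Proof.
  intros ac Ha Hc.
  apply lip_cont with (L := 2 * ((c - a) * (V * V ^ k))).
  - assert (0 <= V) by (pose proof (Rabs_pos a); lra).
    pose proof (pow_le V k H). assert (0 <= V * V ^ k) by (apply Rmult_le_pos; auto). assert (0 <= c - a) by lra. assert (0 <= (c - a) * (V * V ^ k)) by (apply Rmult_le_pos; auto). lra.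
  - intros u v. unfold gk. eapply Rle_trans. apply Cmod_lip.
    pose proof (TF_lip cos cos_lip (fun k u x => cont_cos u k x) k a c u v V ac Ha Hc).
    pose proof (TF_lip sin sin_lip (fun k u x => cont_sin u k x) k a c u v V ac Ha Hc).
    lra.
Qed.

Lemma gk_ex k a c V x y : a <= c -> Rabs a <= V -> Rabs c <= V -> ex_RInt (gk k a c) x y.
Proof.
  intros. apply (@ex_RInt_continuous R_CompleteNormedModule). intros; eapply gk_cont; eauto.
Qed.

Lemma g0_decay a c u V : a <= c -> Rabs a <= V -> Rabs c <= V ->
  gk 0 a c u * (1 + V * Rabs u) <= 8 * V.
Proof.
  intros ac Ha Hc.
  assert (HV : 0 <= V) by (pose proof (Rabs_pos a); lra).
  assert (ca : c - a <= 2 * V).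
  { apply Rabs_le_between in Ha; apply Rabs_le_between in Hc. lra. }
  pose proof (gk_bound 0 a c u V ac Ha Hc) as B. simpl in B.
  assert (B' : gk 0 a c u <= 4 * V) by lra.
  destruct (Req_dec u 0) as [Hu|Hu].
  - subst u. rewrite Rabs_R0. lra.
  - assert (D : gk 0 a c u * Rabs u <= 4).
    { unfold gk. pose proof (Cmod_le_sum (TF cos 0 a c u) (TF sin 0 a c u)).
      pose proof (TFcos0_decay a c u Hu). pose proof (TFsin0_decay a c u Hu).
      assert (0 < Rabs u) by (apply Rabs_pos_lt; auto).
      unfold Rdiv in *.
      assert (Cmod (TF cos 0 a c u, TF sin 0 a c u) <= 4 * / Rabs u) by (eapply Rle_trans; [exact H|]; lra).
      apply Rle_trans with (4 * / Rabs u * Rabs u).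
      - apply Rmult_le_compat_r; lra.
      - rewrite Rmult_assoc, Rinv_l; lra. }
    nra.
Qed.

Lemma int_right V U : 0 < V -> 0 < U ->
  is_RInt (fun u => 8 * V / (1 + V * u)) 0 U (8 * ln (1 + V * U)).
Proof.
  intros HV HU.
  assert (H := is_RInt_derive (V := R_CompleteNormedModule)
      (fun u => 8 * ln (1 + V * u)) (fun u => 8 * V / (1 + V * u)) 0 U).
  rewrite Rmin_left, Rmax_right in H by lra.
  assert (E : minus (G := R_AbelianGroup) (8 * ln (1 + V * U)) (8 * ln (1 + V * 0)) = 8 * ln (1 + V * U)).
  { rewrite Rmult_0_r, Rplus_0_r, ln_1. unfold minus, plus, opp; simpl. ring. }
  change (is_RInt (fun u => 8 * V / (1 + V * u)) 0 U (8 * ln (1 + V * U))).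
  rewrite <- E. apply H.
  - intros x Hx. auto_derive. nra. field. nra.
  - intros x Hx. apply (@ex_derive_continuous R_AbsRing R_NormedModule). auto_derive. nra.
Qed.

Lemma int_left V U : 0 < V -> 0 < U ->
  is_RInt (fun u => 8 * V / (1 - V * u)) (- U) 0 (8 * ln (1 + V * U)).
Proof.
  intros HV HU.
  assert (H := is_RInt_derive (V := R_CompleteNormedModule)
      (fun u => - 8 * ln (1 - V * u)) (fun u => 8 * V / (1 - V * u)) (- U) 0).
  rewrite Rmin_left, Rmax_right in H by lra.
  assert (E : minus (G := R_AbelianGroup) (- 8 * ln (1 - V * 0)) (- 8 * ln (1 - V * - U)) = 8 * ln (1 + V * U)).
  { rewrite Rmult_0_r, Rminus_0_r, ln_1.
    replace (1 - V * - U) with (1 + V * U) by ring.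
    unfold minus, plus, opp; simpl. ring. }
  rewrite <- E. apply H.
  - intros x Hx. auto_derive. nra. field. nra.
  - intros x Hx. apply (@ex_derive_continuous R_AbsRing R_NormedModule). auto_derive. nra.
Qed.

Lemma log_ineq U V : 1 < U -> 0 < V -> ln (1 + V * U) <= 2 * ln U + V / U.
Proof.
  intros HU HV.
  assert (E : U * U * (1 + V / U) = U * U + V * U) by (field; lra).
  apply Rle_trans with (ln (U * U * (1 + V / U))).
  - apply ln_le. nra. rewrite E. nra.
  - assert (0 < V / U) by (apply Rdiv_lt_0_compat; lra).
    rewrite ln_mult, ln_mult by nra.
    assert (ln (1 + V / U) <= V / U).
    { rewrite <- (ln_exp (V / U)) at 2. apply ln_le. lra. apply exp_ineq1_le. }
    lra.
Qed.

Theorem lemma3p6 :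
  exists Cst : R, 0 < Cst /\
    forall (a b U V : R) (k : nat),
      1 < U -> 0 < V -> Rabs a < V -> Rabs b < V -> (k <= 1)%nat ->
      RInt (fun u => Cmod (fourier (mon_ind k a b) u)) (- U) U
        <= Cst * (powerRZ U (2 * Z.of_nat k - 1) * V ^ (k + 1)
                  + (1 - INR k) * ln U).
Proof.
  exists 32. split; [lra|].
  intros a b U V k HU HV Ha Hb Hk.
  pose (c := Rmax a b).
  assert (ac : a <= c) by apply Rmax_l.
  assert (Ha' : Rabs a <= V) by lra.
  assert (Hc : Rabs c <= V).
  { unfold c, Rmax. destruct (Rle_dec a b); lra. }
  assert (ca : c - a <= 2 * V).
  { apply Rabs_le_between in Ha'; apply Rabs_le_between in Hc. lra. }
  rewrite (RInt_ext _ (gk k a c)).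
  2: { intros x _. unfold gk. rewrite fourier_eq. reflexivity. }
  destruct k as [|[|k]]; [| |exfalso; lia].
  - rewrite <- (RInt_Chasles (V := R_CompleteNormedModule) (gk 0 a c) (- U) 0 U)
      by (eapply gk_ex; eauto).
    assert (L : RInt (gk 0 a c) (- U) 0 <= 8 * ln (1 + V * U)).
    { rewrite <- (is_RInt_unique (V := R_CompleteNormedModule) _ _ _ _ (int_left V U HV ltac:(lra))).
      apply RInt_le. lra. eapply gk_ex; eauto.
      eexists; apply int_left; lra.
      intros x Hx. pose proof (g0_decay a c x V ac Ha' Hc) as D.
      rewrite Rabs_left in D by lra.
      apply Rmult_le_reg_r with (1 - V * x). nra.
      unfold Rdiv. rewrite Rmult_assoc, Rinv_l by nra. nra. }
    assert (R1 : RInt (gk 0 a c) 0 U <= 8 * ln (1 + V * U)).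
    { rewrite <- (is_RInt_unique (V := R_CompleteNormedModule) _ _ _ _ (int_right V U HV ltac:(lra))).
      apply RInt_le. lra. eapply gk_ex; eauto.
      eexists; apply int_right; lra.
      intros x Hx. pose proof (g0_decay a c x V ac Ha' Hc) as D.
      rewrite Rabs_right in D by lra.
      apply Rmult_le_reg_r with (1 + V * x). nra.
      unfold Rdiv. rewrite Rmult_assoc, Rinv_l by nra. nra. }
    change (plus (RInt (gk 0 a c) (- U) 0) (RInt (gk 0 a c) 0 U)) with
      (RInt (gk 0 a c) (- U) 0 + RInt (gk 0 a c) 0 U).
    replace (powerRZ U (2 * Z.of_nat 0 - 1)) with (/ U) by (simpl; field; lra).
    replace (V ^ (0 + 1)) with V by (simpl; ring).
    replace (1 - INR 0) with 1 by (simpl; ring).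
    pose proof (log_ineq U V HU HV).
    assert (0 < ln U) by (rewrite <- ln_1; apply ln_increasing; lra).
    eapply Rle_trans; [apply Rplus_le_compat; [exact L | exact R1] |].
    assert (0 < V / U) by (apply Rdiv_lt_0_compat; lra).
    unfold Rdiv in *. rewrite (Rmult_comm (/ U) V). lra.
  - apply Rle_trans with (RInt (fun _ => 4 * V ^ 2) (- U) U).
    + apply RInt_le. lra. eapply gk_ex; eauto. apply ex_RInt_const.
      intros x Hx. pose proof (gk_bound 1 a c x V ac Ha' Hc).
      simpl in H. nra.
    + rewrite RInt_const.
      replace (powerRZ U (2 * Z.of_nat 1 - 1)) with U by (simpl; ring).
      simpl. unfold scal; simpl; unfold mult; simpl. nra.
Qed.
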